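(* The assignment $\mathcal{P}$ described below is an algebra over the operad $\mathcal{W}$ of black boxes and wiring diagrams; that is: (1) (identity law) for every black box $Z$ and every $f\in\mathcal{P}(Z)$, $\mathcal{P}(\mathrm{id}_Z)(f)=f$; (2) (composition law) for every wiring diagram $\psi\colon (Y(i))_{i\in n}\to Z$, every family of wiring diagrams $\phi_i\colon (X_j)_{j\in m_i}\to Y(i)$ ($i\in n$), and every family of propagators $f_j\in\mathcal{P}(X_j)$ ($j\in m=\coprod_i m_i$), one has $$\mathcal{P}\big(\psi\circ(\phi_i)_{i\in n}\big)\big((f_j)_{j\in m}\big)=\mathcal{P}(\psi)\Big(\big(\mathcal{P}(\phi_i)((f_j)_{j\in m_i})\big)_{i\in n}\Big).$$
   Context: Wiring diagrams. A black box $X=(\mathrm{in}(X),\mathrm{out}(X),{\tt vset})$: finite sets of input and output wires with ${\tt vset}$ assigning a pointed set to each wire. For a family $Y=(Y(i))_{i\in n}$ put $\mathrm{in}(Y)=\coprod_i\mathrm{in}(Y(i))$, $\mathrm{out}(Y)=\coprod_i\mathrm{out}(Y(i))$. A wiring diagram $\psi\colon Y\to Z$ consists of a finite set $\mathrm{Del}(\psi)$ of delay nodes with pointed sets ${\tt vset}(d)$ and a supplier assignment $s_\psi\colon\mathrm{Dem}(\psi)=\mathrm{out}(Z)\amalg\mathrm{in}(Y)\amalg\mathrm{Del}(\psi)\to\mathrm{Sup}(\psi)=\mathrm{in}(Z)\amalg\mathrm{out}(Y)\amalg\mathrm{Del}(\psi)$ preserving ${\tt vset}$ with $s_\psi(\mathrm{out}(Z))\subseteq\mathrm{out}(Y)\amalg\mathrm{Del}(\psi)$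 (identified up to bijection of delay nodes). $\mathrm{id}_Z$ has no delay nodes and identity supplier assignment. Composition: for $\psi\colon Y\to Z$ and $\phi_i\colon X_i\to Y(i)$, let $\phi=\bigotimes\phi_i\colon X\to Y$ be the disjoint union; $\omega=\psi\circ\phi$ has $\mathrm{Del}(\omega)=\mathrm{Del}(\phi)\amalg\mathrm{Del}(\psi)$ and $s_\omega=h\circ s_\phi|_{\mathrm{in}(X)\amalg\mathrm{Del}(\phi)}\amalg f\circ s_\psi|_{\mathrm{out}(Z)\amalg\mathrm{Del}(\psi)}$ with $f=\mathrm{id}_{\mathrm{in}(Z)}\amalg s_\phi|_{\mathrm{out}(Y)}\amalg\mathrm{id}_{\mathrm{Del}(\psi)}\colon\mathrm{Sup}(\psi)\to\mathrm{Sup}(\omega)$, $h=(f\circ s_\psi)|_{\mathrm{in}(Y)}\amalg\mathrm{id}_{\mathrm{out}(X)}\amalg\mathrm{id}_{\mathrm{Del}(\phi)}\colon\mathrm{Sup}(\phi)\to\mathrm{Sup}(\omega)$, where $\mathrm{Sup}(\omega)=\mathrm{in}(Z)\amalg\mathrm{out}(X)\amalg\mathrm{Del}(\omega)$. Lists and propagators. $\mathrm{List}(S)=\coprod_{t\in\mathbb{N}}S^t$; $\partial\ell$ drops the last entry of a nonempty list; $[\,]$ is the empty list. A list of tuples in $\prod_k S_k$ is identified with a tuple of lists of equal length (''zipping''). An $n$-historical propagator $f\colon\mathrm{List}(R)\to\mathrm{List}(S)$ satisfies $|f(\ell)|=|\ell|+n$ and $\partial f(\ell)=f(\partial\ell)$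 for $|\ell|\ge1$; $\mathrm{Hist}^n(R,S)$ is their set. For a set $I$ of wires put ${\tt vset}_I=\prod_{i\in I}{\tt vset}(i)$ (a one-point set if $I=\emptyset$), and write $\overline{I}=\mathrm{List}({\tt vset}_I)$. The algebra $\mathcal{P}$. On objects, $\mathcal{P}(Z)=\mathrm{Hist}^1({\tt vset}_{\mathrm{in}(Z)},{\tt vset}_{\mathrm{out}(Z)})$. On a wiring diagram $\psi\colon (Y(i))_{i\in n}\to Z$ and $g_i\in\mathcal{P}(Y(i))$: let $g=\prod_i g_i\colon\overline{\mathrm{in}(Y)}\to\overline{\mathrm{out}(Y)}$ (applied componentwise after unzipping). Let $\mathrm{inDem}(\psi)=\mathrm{in}(Y)\amalg\mathrm{Del}(\psi)$ and $\mathrm{inSup}(\psi)=\mathrm{out}(Y)\amalg\mathrm{Del}(\psi)$. Define $S_\psi=\mathrm{List}(\pi_{s_\psi})\colon\overline{\mathrm{Sup}(\psi)}\to\overline{\mathrm{Dem}(\psi)}$ where $\pi_{s_\psi}((x_a)_{a\in\mathrm{Sup}})=(x_{s_\psi(d)})_{d\in\mathrm{Dem}}$; $S'_\psi=\pi_{\overline{\mathrm{inDem}(\psi)}}\circ S_\psi\colon\overline{\mathrm{Sup}(\psi)}\to\overline{\mathrm{inDem}(\psi)}$; $S''_\psi=\mathrm{List}(\pi_{s_\psi|_{\mathrm{out}(Z)}})\colon\overline{\mathrm{inSup}(\psi)}\to\overline{\mathrm{out}(Z)}$. Let $\delta^1_\psi\colon\overline{\mathrm{Del}(\psi)}\to\overline{\mathrm{Del}(\psi)}$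 be the 1-moment delay, prepending the basepoint: $\delta^1(\ell)=[*,\ell(1),\dots,\ell(t)]$. Set $E_{\psi,g}=g\times\delta^1_\psi\colon\overline{\mathrm{inDem}(\psi)}\to\overline{\mathrm{inSup}(\psi)}$, and define $C_{\psi,g}\colon\overline{\mathrm{in}(Z)}\to\overline{\mathrm{Sup}(\psi)}$ recursively by $C_{\psi,g}([\,])=[\,]$ and, for $|\ell|\geq1$, $C_{\psi,g}(\ell)=\big(\ell,\;E_{\psi,g}\circ S'_\psi\circ C_{\psi,g}(\partial\ell)\big)$ (a pair of equal-length lists in $\overline{\mathrm{in}(Z)}\times\overline{\mathrm{inSup}(\psi)}=\overline{\mathrm{Sup}(\psi)}$). Then $\mathcal{P}(\psi)(g_1,\dots,g_n)=S''_\psi\circ E_{\psi,g}\circ S'_\psi\circ C_{\psi,g}\in\mathcal{P}(Z)$. *)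

(* Defs.v *)
From HB Require Import structures.
From mathcomp Require Import all_boot.

Set Implicit Arguments.
Unset Strict Implicit.
Unset Printing Implicit Defensive.

Record pset := PSet { pcar : Type; ppt : pcar }.

Record box := Box {
  bin  : finType;
  bout : finType;
  vin  : bin -> pset;
  vout : bout -> pset }.

Definition Tup (A : Type) (v : A -> pset) := forall a : A, pcar (v a).
Definition ptTup (A : Type) (v : A -> pset) : Tup v := fun a => ppt (v a).

Definition vsum (A B : Type) (vA : A -> pset) (vB : B -> pset) : A + B -> pset :=
  fun x => match x with inl a => vA a | inr b => vB b end.

Definition tjoin (A B : Type) (vA : A -> pset) (vB : B -> pset)
  (ta : Tup vA) (tb : Tup vB) : Tup (vsum vA vB) :=
  fun x => match x as x0 return pcar (vsum vA vB x0) with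
           | inl a => ta a | inr b => tb b end.
Definition tfst (A B : Type) (vA : A -> pset) (vB : B -> pset)
  (t : Tup (vsum vA vB)) : Tup vA := fun a => t (inl a).
Definition tsnd (A B : Type) (vA : A -> pset) (vB : B -> pset)
  (t : Tup (vsum vA vB)) : Tup vB := fun b => t (inr b).

Definition pairL (A B : Type) (vA : A -> pset) (vB : B -> pset)
  (a : seq (Tup vA)) (b : seq (Tup vB)) : seq (Tup (vsum vA vB)) :=
  [seq tjoin p.1 p.2 | p <- zip a b].

Definition castp (P Q : pset) (e : P = Q) (x : pcar P) : pcar Q :=
  match e in _ = R return pcar R with erefl => x end.

Definition dropl (T : Type) (l : seq T) : seq T := take (size l).-1 l.

Definition hist1 (R S : Type) (f : seq R -> seq S) : Prop :=
  (forall l, size (f l) = (size l).+1) /\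
  (forall l, 0 < size l -> dropl (f l) = f (dropl l)).

(* underlying functions of P(Z) = Hist^1(vset_in(Z), vset_out(Z)) *)
Definition prop (Z : box) := seq (Tup (@vin Z)) -> seq (Tup (@vout Z)).

Definition inF (I : finType) (Y : I -> box) : Type := {i : I & bin (Y i)}.
Definition outF (I : finType) (Y : I -> box) : Type := {i : I & bout (Y i)}.
Definition vinF (I : finType) (Y : I -> box) : inF Y -> pset :=
  fun x => vin (projT2 x).
Definition voutF (I : finType) (Y : I -> box) : outF Y -> pset :=
  fun x => vout (projT2 x).

(* Dem = out(Z) + (in(Y) + Del), Sup = in(Z) + (out(Y) + Del).
   The supplier assignment s_psi : Dem -> Sup is given by its two
   restrictions: wd_sO on out(Z) (which by the condition
   s(out Z) \subseteq out(Y) + Del lands in inSup = out(Y) + Del)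
   and wd_sI on inDem = in(Y) + Del.  wd_hO / wd_hI: vset-preservation. *)
Record WD (I : finType) (Y : I -> box) (Z : box) := MkWD {
  wd_Del  : finType;
  wd_vdel : wd_Del -> pset;
  wd_sO   : bout Z -> outF Y + wd_Del;
  wd_sI   : inF Y + wd_Del -> bin Z + (outF Y + wd_Del);
  wd_hO   : forall o, vsum (@voutF I Y) wd_vdel (wd_sO o) = vout o;
  wd_hI   : forall d, vsum (@vin Z) (vsum (@voutF I Y) wd_vdel) (wd_sI d)
                      = vsum (@vinF I Y) wd_vdel d }.

Arguments wd_Del {I Y Z}.
Arguments wd_vdel {I Y Z}.
Arguments wd_sO {I Y Z}.
Arguments wd_sI {I Y Z}.
Arguments wd_hO {I Y Z}.
Arguments wd_hI {I Y Z}.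

Section Identity.
Variable Z : box.
Definition idY : unit -> box := fun _ => Z.

Definition id_sO (o : bout Z) : outF idY + void := inl (existT _ tt o).
Definition id_sI (d : inF idY + void) : bin Z + (outF idY + void) :=
  match d with inl x => inl (projT2 x) | inr v => match v with end end.

Lemma id_hO o : vsum (@voutF _ idY) (fun v : void => match v with end) (id_sO o)
                = vout o.
Proof. by []. Qed.

Lemma id_hI d : vsum (@vin Z) (vsum (@voutF _ idY) (fun v : void => match v with end))
                  (id_sI d) = vsum (@vinF _ idY) (fun v : void => match v with end) d.
Proof. by case: d => [[[] x]|[]]. Qed.

Definition wd_id : WD idY Z :=
  @MkWD _ idY Z void (fun v : void => match v with end) id_sO id_sI id_hO id_hI.
End Identity.

Unset Implicit Arguments.
Section Composition.
Variables (I : finType) (Y : I -> box) (Z : box) (psi : WD Y Z).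
Variables (m : I -> finType) (X : forall i, m i -> box).
Variable phi : forall i : I, WD (X i) (Y i).

Definition Xc (p : {i : I & m i}) : box := X (projT1 p) (projT2 p).

Definition DelPhi : finType := {i : I & wd_Del (phi i)}.
Definition vdelPhi (p : DelPhi) : pset := wd_vdel (phi (projT1 p)) (projT2 p).
Definition DelOm : finType := (DelPhi + wd_Del psi)%type.
Definition vdelOm : DelOm -> pset := vsum vdelPhi (wd_vdel psi).

Definition vinSupOm := vsum (@voutF _ Xc) vdelOm.
Definition vSupOm := vsum (@vin Z) vinSupOm.
Definition vinSupPsi := vsum (@voutF _ Y) (wd_vdel psi).
Definition vSupPsi := vsum (@vin Z) vinSupPsi.
Definition vinSupPhi i := vsum (@voutF _ (X i)) (wd_vdel (phi i)).
Definition vSupPhi i := vsum (@vin (Y i)) (vinSupPhi i).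

Definition embO (i : I) (x : outF (X i) + wd_Del (phi i)) : outF Xc + DelOm :=
  match x with
  | inl o => inl (existT (fun p => bout (Xc p)) (existT m i (projT1 o)) (projT2 o))
  | inr d => inr (inl (existT _ i d))
  end.

Definition fO (x : outF Y + wd_Del psi) : outF Xc + DelOm :=
  match x with
  | inl o => embO (projT1 o) (wd_sO (phi (projT1 o)) (projT2 o))
  | inr d => inr (inr d)
  end.

Definition fS (a : bin Z + (outF Y + wd_Del psi)) : bin Z + (outF Xc + DelOm) :=
  match a with inl z => inl z | inr x => inr (fO x) end.

Definition hS (i : I) (a : bin (Y i) + (outF (X i) + wd_Del (phi i)))
  : bin Z + (outF Xc + DelOm) :=
  match a with
  | inl y => fS (wd_sI psi (inl (existT _ i y)))
  | inr x => inr (embO i x)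
  end.

Definition comp_sO (o : bout Z) : outF Xc + DelOm := fO (wd_sO psi o).

Definition comp_sI (d : inF Xc + DelOm) : bin Z + (outF Xc + DelOm) :=
  match d with
  | inl x => hS (projT1 (projT1 x)) (wd_sI (phi (projT1 (projT1 x)))
                   (inl (existT _ (projT2 (projT1 x)) (projT2 x))))
  | inr (inl p) => hS (projT1 p) (wd_sI (phi (projT1 p)) (inr (projT2 p)))
  | inr (inr d) => fS (wd_sI psi (inr d))
  end.

Lemma embO_v i x : vinSupOm (embO i x) = vinSupPhi i x.
Proof. by case: x => [[j o]|d]. Qed.

Lemma fO_v x : vinSupOm (fO x) = vinSupPsi x.
Proof.
case: x => [[i o]|d] //=.
exact: (etrans (embO_v _ _) (wd_hO (phi i) o)).
Qed.

Lemma fS_v a : vSupOm (fS a) = vSupPsi a.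
Proof. case: a => [z|x] //=; exact: fO_v. Qed.

Lemma hS_v i a : vSupOm (hS i a) = vSupPhi i a.
Proof.
case: a => [y|x] /=.
  exact: (etrans (fS_v _) (wd_hI psi (inl (existT _ i y)))).
exact: embO_v.
Qed.

Lemma comp_hO o : vinSupOm (comp_sO o) = vout o.
Proof. exact: (etrans (fO_v _) (wd_hO psi o)). Qed.

Lemma comp_hI d : vSupOm (comp_sI d) = vsum (@vinF _ Xc) vdelOm d.
Proof.
case: d => [[[i j] w]|[[i d]|d]] /=.
- exact: (etrans (hS_v _ _) (wd_hI (phi i) (inl (existT _ j w)))).
- exact: (etrans (hS_v _ _) (wd_hI (phi i) (inr d))).
- exact: (etrans (fS_v _) (wd_hI psi (inr d))).
Qed.

Definition wd_comp : WD Xc Z :=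
  @MkWD _ Xc Z DelOm vdelOm comp_sO comp_sI comp_hO comp_hI.
End Composition.

Section Algebra.
Variables (I : finType) (Y : I -> box) (Z : box) (psi : WD Y Z).
Variable g : forall i, prop (Y i).

Let vdel := wd_vdel psi.
Let vinDem := vsum (@vinF _ Y) vdel.
Let vinSup := vsum (@voutF _ Y) vdel.
Let vSup := vsum (@vin Z) vinSup.

(* g = prod_i g_i : List(vset_in(Y)) -> List(vset_out(Y)),
   applied componentwise after unzipping (output length |l|+1). *)
Definition gprod (l : seq (Tup (@vinF _ Y))) : seq (Tup (@voutF _ Y)) :=
  mkseq (fun k (x : outF Y) =>
           nth (ptTup (@vout (Y (projT1 x))))
               (g (projT1 x) (map (fun t (w : bin (Y (projT1 x))) => t (existT _ (projT1 x) w)) l)) k (projT2 x))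
        (size l).+1.

Definition Sp (l : seq (Tup vSup)) : seq (Tup vinDem) :=
  map (fun t d => castp (wd_hI psi d) (t (wd_sI psi d))) l.
Definition Spp (l : seq (Tup vinSup)) : seq (Tup (@vout Z)) :=
  map (fun t o => castp (wd_hO psi o) (t (wd_sO psi o))) l.

Definition delay1 (l : seq (Tup vdel)) : seq (Tup vdel) := ptTup vdel :: l.

Definition Epg (l : seq (Tup vinDem)) : seq (Tup vinSup) :=
  pairL (gprod (map (@tfst _ _ _ _) l)) (delay1 (map (@tsnd _ _ _ _) l)).

Fixpoint Cfuel (n : nat) (l : seq (Tup (@vin Z))) : seq (Tup vSup) :=
  match n with
  | 0 => [::]
  | n'.+1 => pairL l (Epg (Sp (Cfuel n' (dropl l))))
  end.
Definition Cpg (l : seq (Tup (@vin Z))) : seq (Tup vSup) := Cfuel (size l) l.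

Definition Palg : prop Z := fun l => Spp (Epg (Sp (Cpg l))).
End Algebra.

Arguments Palg {I Y Z} psi g _.
Arguments wd_comp {I Y Z} psi {m X} phi.
Arguments Xc {I} m X p.

(* Main.v *)
From Stdlib Require Import FunctionalExtensionality ProofIrrelevance.
Require Import Defs.
From HB Require Import structures.
From mathcomp Require Import all_boot.

Set Implicit Arguments. Unset Strict Implicit. Unset Printing Implicit Defensive.

Lemma castp_id (P : pset) (e : P = P) x : castp e x = x.
Proof. by rewrite (proof_irrelevance _ e erefl). Qed.

Lemma castp_trans (P Q R : pset) (e1 : P = Q) (e2 : Q = R) e3 x :
  castp e2 (castp e1 x) = castp e3 x.
Proof. subst Q R. by rewrite !castp_id. Qed.

Lemma tup_ext A (v : A -> pset) (t1 t2 : Tup v) : (forall a, t1 a = t2 a) -> t1 = t2.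
Proof. exact: functional_extensionality_dep. Qed.

Lemma tjoin_pt A B (vA : A -> pset) (vB : B -> pset) :
  tjoin (ptTup vA) (ptTup vB) = ptTup (vsum vA vB).
Proof. by apply: tup_ext => -[]. Qed.

Lemma size_pairL A B (vA : A -> pset) (vB : B -> pset) a b :
  size (@pairL A B vA vB a b) = minn (size a) (size b).
Proof. by rewrite size_map size_zip. Qed.

Lemma nth_pairL A B (vA : A -> pset) (vB : B -> pset) a b k :
  k < size a -> k < size b ->
  nth (ptTup _) (@pairL A B vA vB a b) k = tjoin (nth (ptTup _) a k) (nth (ptTup _) b k).
Proof.
move=> ha hb; rewrite /pairL (nth_map (ptTup vA, ptTup vB)); last first.
  by rewrite size_zip leq_min ha hb.
by rewrite nth_zip_cond size_zip leq_min ha hb.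
Qed.

Lemma pairL_nil A B (vA : A -> pset) (vB : B -> pset) b : @pairL A B vA vB [::] b = [::].
Proof. by case: b. Qed.

Lemma size_dropl T (l : seq T) : size (dropl l) = (size l).-1.
Proof. by rewrite /dropl size_takel // leq_pred. Qed.

Lemma nth_dropl T (x0 : T) l k : k < (size l).-1 -> nth x0 (dropl l) k = nth x0 l k.
Proof. by move=> h; rewrite /dropl nth_take. Qed.

Lemma map_dropl T U (f : T -> U) l : map f (dropl l) = dropl (map f l).
Proof. by rewrite /dropl map_take size_map. Qed.

Lemma dropl_pairL A B (vA : A -> pset) (vB : B -> pset) a b :
  size a = size b -> dropl (@pairL A B vA vB a b) = pairL (dropl a) (dropl b).
Proof.
move=> e; apply: (eq_from_nth (x0 := ptTup _)).
  by rewrite size_dropl !size_pairL !size_dropl e !minnn.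
move=> k; rewrite size_dropl size_pairL e minnn => hk.
have hk' : k < size b by case: (size b) hk => // n /ltnW.
rewrite nth_dropl ?size_pairL ?e ?minnn //.
rewrite !nth_pairL ?size_dropl ?e //.
by rewrite !nth_dropl ?e.
Qed.

Lemma pairL_take A B (vA : A -> pset) (vB : B -> pset) a b :
  @pairL A B vA vB a b = pairL a (take (size a) b).
Proof.
apply: (eq_from_nth (x0 := ptTup _)).
  by rewrite !size_pairL size_take_min minnA minnn.
move=> k; rewrite size_pairL leq_min => /andP[ha hb].
rewrite !nth_pairL ?nth_take // size_take_min leq_min ha hb //.
Qed.

Lemma castp_pi (P Q : pset) (e e' : P = Q) x : castp e x = castp e' x.
Proof. by rewrite (proof_irrelevance _ e e'). Qed.

Lemma castp_tr (P Q R : pset) (e1 : P = Q) (e2 : Q = R) x :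
  castp e2 (castp e1 x) = castp (etrans e1 e2) x.
Proof. exact: castp_trans. Qed.
Unset Implicit Arguments.
Section Gen.
Variables (I : finType) (Y : I -> box) (Z : box) (psi : WD Y Z).
Variable g : forall i, prop (Y i).

Definition tr (l : seq (Tup (@vin Z))) := Epg I Y Z psi g (Sp I Y Z psi (Cpg I Y Z psi g l)).

Lemma size_gprod l : size (gprod I Y g l) = (size l).+1.
Proof. by rewrite /gprod size_mkseq. Qed.

Lemma nth_gprod l k : k <= size l ->
  nth (ptTup _) (gprod I Y g l) k =
  fun x => nth (ptTup _) (g (projT1 x) (map (fun t (w : bin (Y (projT1 x))) => t (existT _ (projT1 x) w)) l)) k (projT2 x).
Proof. by move=> hk; rewrite /gprod nth_mkseq. Qed.

Lemma size_Sp l : size (Sp I Y Z psi l) = size l.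
Proof. by rewrite size_map. Qed.

Lemma nth_Sp l k : k < size l ->
  nth (ptTup _) (Sp I Y Z psi l) k =
  fun d => castp (wd_hI psi d) (nth (ptTup _) l k (wd_sI psi d)).
Proof. by move=> hk; rewrite /Sp (nth_map (ptTup _)). Qed.

Lemma size_Spp l : size (Spp I Y Z psi l) = size l.
Proof. by rewrite size_map. Qed.

Lemma nth_Spp l k : k < size l ->
  nth (ptTup _) (Spp I Y Z psi l) k =
  fun o => castp (wd_hO psi o) (nth (ptTup _) l k (wd_sO psi o)).
Proof. by move=> hk; rewrite /Spp (nth_map (ptTup _)). Qed.

Lemma size_Epg l : size (Epg I Y Z psi g l) = (size l).+1.
Proof. by rewrite /Epg size_pairL size_gprod /delay1 /= !size_map minnn. Qed.

Lemma nth_Epg l k : k <= size l ->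
  nth (ptTup _) (Epg I Y Z psi g l) k =
  tjoin (nth (ptTup _) (gprod I Y g (map (@tfst _ _ _ _) l)) k)
        (nth (ptTup _) (delay1 I Y Z psi (map (@tsnd _ _ _ _) l)) k).
Proof.
move=> hk; rewrite /Epg nth_pairL // ?size_gprod /delay1 /= !size_map //.
Qed.

Lemma size_Cfuel n l : size l = n -> size (Cfuel I Y Z psi g n l) = n.
Proof.
elim: n l => [|n IH] l hl //=.
by rewrite size_pairL size_Epg size_Sp IH ?hl ?minnn // size_dropl hl.
Qed.

Lemma size_Cpg l : size (Cpg I Y Z psi g l) = size l.
Proof. exact: size_Cfuel. Qed.

Lemma size_tr l : size (tr l) = (size l).+1.
Proof. by rewrite /tr size_Epg size_Sp size_Cpg. Qed.

Lemma size_pLtr l : size (pairL l (tr (dropl l))) = size l.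
Proof. by rewrite size_pairL size_tr size_dropl; case: (size l) => // n; rewrite minnSS minnn. Qed.

Lemma size_pLtr' l : size (pairL l (tr l)) = size l.
Proof. by rewrite size_pairL size_tr; apply/minn_idPl. Qed.

Lemma Cpg_eq l : Cpg I Y Z psi g l = pairL l (tr (dropl l)).
Proof.
case hl: (size l) => [|n].
  by move/size0nil: hl => ->; rewrite /Cpg.
rewrite /Cpg hl /= /tr /Cpg size_dropl hl.
done.
Qed.

Lemma dropl_cons T (x : T) l : 0 < size l -> dropl (x :: l) = x :: dropl l.
Proof. by case: l. Qed.

Lemma tr_fix0 l : tr l = Epg I Y Z psi g (Sp I Y Z psi (pairL l (tr (dropl l)))).
Proof. by rewrite /tr Cpg_eq. Qed.

Hypothesis hg : forall i, hist1 (g i).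

Lemma dropl_gprod l : 0 < size l -> dropl (gprod I Y g l) = gprod I Y g (dropl l).
Proof.
move=> hl; apply: (eq_from_nth (x0 := ptTup _)).
  by rewrite size_dropl !size_gprod size_dropl prednK.
move=> k; rewrite size_dropl size_gprod /= => hk.
rewrite nth_dropl ?size_gprod // nth_gprod ?(ltnW hk) // nth_gprod; last by rewrite size_dropl -ltnS prednK.
apply: tup_ext => x.
rewrite map_dropl -(proj2 (hg _)) ?size_map // nth_dropl //.
by rewrite (proj1 (hg _)) size_map.
Qed.

Lemma dropl_Epg l : 0 < size l -> dropl (Epg I Y Z psi g l) = Epg I Y Z psi g (dropl l).
Proof.
move=> hl; rewrite /Epg dropl_pairL; last by rewrite size_gprod /delay1 /= !size_map.
rewrite dropl_gprod ?size_map // /delay1 dropl_cons ?size_map //.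
by rewrite !map_dropl.
Qed.

Lemma dropl_Sp l : dropl (Sp I Y Z psi l) = Sp I Y Z psi (dropl l).
Proof. by rewrite /Sp map_dropl. Qed.

Lemma dropl_Spp l : dropl (Spp I Y Z psi l) = Spp I Y Z psi (dropl l).
Proof. by rewrite /Spp map_dropl. Qed.

Lemma dropl_Cpg n l : size l = n.+1 -> dropl (Cpg I Y Z psi g l) = Cpg I Y Z psi g (dropl l).
Proof.
elim: n l => [|n IH] l hl.
  rewrite Cpg_eq dropl_pairL ?size_tr ?size_dropl ?hl //.
  have -> : dropl l = [::] by apply/size0nil; rewrite size_dropl hl.
  by rewrite pairL_nil.
rewrite Cpg_eq dropl_pairL ?size_tr ?size_dropl ?hl //.
have h : dropl (tr (dropl l)) = tr (dropl (dropl l)).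
  rewrite /tr dropl_Epg ?size_Sp ?size_Cpg ?size_dropl ?hl //.
  by rewrite dropl_Sp IH ?size_dropl ?hl.
by rewrite h -Cpg_eq.
Qed.

Lemma tr_causal l : 0 < size l -> dropl (tr l) = tr (dropl l).
Proof.
case hl: (size l) => [|n] // _.
by rewrite /tr dropl_Epg ?size_Sp ?size_Cpg ?hl // dropl_Sp (dropl_Cpg n).
Qed.

Lemma tr_fix l : tr l = Epg I Y Z psi g (Sp I Y Z psi (pairL l (tr l))).
Proof.
rewrite {1}tr_fix0; congr (Epg _ _ _ _ _ (Sp _ _ _ _ _)).
case hl: (size l) => [|n].
  by move/size0nil: hl => ->; rewrite !pairL_nil.
rewrite -tr_causal ?hl // (pairL_take l (tr l)) hl /dropl size_tr hl.
by rewrite (pairL_take l (take _ _)) hl.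
Qed.

Definition inp l : seq (Tup (@vinF I Y)) := map (@tfst _ _ _ _) (Sp I Y Z psi (pairL l (tr l))).

Lemma size_inp l : size (inp l) = size l.
Proof. by rewrite /inp size_map size_Sp size_pLtr'. Qed.

Lemma nth_inp l t y : t < size l ->
  nth (ptTup _) (inp l) t y =
  castp (wd_hI psi (inl y)) (tjoin (nth (ptTup _) l t) (nth (ptTup _) (tr l) t) (wd_sI psi (inl y))).
Proof.
move=> ht; rewrite /inp (nth_map (ptTup _)) ?size_Sp ?size_pLtr' //.
by rewrite nth_Sp ?size_pLtr' // nth_pairL // size_tr ltnW.
Qed.

Lemma tr_out l k x : k <= size l ->
  nth (ptTup _) (tr l) k (inl x) =
  nth (ptTup _) (g (projT1 x) (map (fun t (w : bin (Y (projT1 x))) => t (existT _ (projT1 x) w)) (inp l))) k (projT2 x).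
Proof.
move=> hk; rewrite {1}tr_fix nth_Epg ?size_Sp ?size_pLtr' //.
by rewrite nth_gprod // size_map size_Sp size_pLtr'.
Qed.

Lemma tr_del0 l d : nth (ptTup _) (tr l) 0 (inr d) = ppt (wd_vdel psi d).
Proof. by rewrite {1}tr_fix nth_Epg. Qed.

Lemma tr_delS l k d : k < size l ->
  nth (ptTup _) (tr l) k.+1 (inr d) =
  castp (wd_hI psi (inr d)) (tjoin (nth (ptTup _) l k) (nth (ptTup _) (tr l) k) (wd_sI psi (inr d))).
Proof.
move=> hk; rewrite {1}tr_fix nth_Epg ?size_Sp ?size_pLtr' //.
rewrite /tjoin /delay1 /= (nth_map (ptTup _)) ?size_Sp ?size_pLtr' //.
by rewrite nth_Sp ?size_pLtr' // nth_pairL // size_tr ltnW.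
Qed.

Lemma nth_tr_dropl l t : 0 < size l -> t < size l ->
  nth (ptTup _) (tr (dropl l)) t = nth (ptTup _) (tr l) t.
Proof. by move=> hl ht; rewrite -tr_causal // nth_dropl // size_tr. Qed.

Lemma inp_dropl l : 0 < size l -> inp (dropl l) = dropl (inp l).
Proof.
move=> hl; apply: (eq_from_nth (x0 := ptTup _)).
  by rewrite size_dropl !size_inp size_dropl.
move=> t; rewrite size_inp size_dropl => ht.
have ht' : t < size l by apply: leq_trans ht (leq_pred _).
rewrite nth_dropl ?size_inp //.
apply: tup_ext => y.
rewrite nth_inp ?size_dropl // nth_inp //.
by rewrite nth_tr_dropl // nth_dropl.
Qed.

Lemma hist1_Palg : hist1 (Palg psi g).
Proof.
split=> l; first by rewrite /Palg size_Spp size_Epg size_Sp size_Cpg.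
move=> hl; rewrite /Palg dropl_Spp.
by have := tr_causal l hl; rewrite /tr => ->.
Qed.
End Gen.

Lemma id_law (Z : box) (f : prop Z) : hist1 f ->
  forall l, Palg (wd_id Z) (fun _ => f) l = f l.
Proof.
move=> hf l.
have hg : forall i : unit, hist1 ((fun _ => f) i) by [].
have hP := hist1_Palg _ _ _ (wd_id Z) (fun _ => f) hg.
apply: (eq_from_nth (x0 := ptTup _)); first by rewrite (proj1 hP) (proj1 hf).
move=> k; rewrite (proj1 hP) => hk.
have -> : Palg (wd_id Z) (fun _ => f) l = Spp _ _ _ (wd_id Z) (tr _ _ _ (wd_id Z) (fun _ => f) l) by [].
rewrite nth_Spp ?size_tr //.
apply: tup_ext => o; rewrite castp_id.
apply: etrans (tr_out _ _ _ _ _ hg l k (existT _ tt o) hk) _.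
congr (nth _ (f _) k o).
apply: (eq_from_nth (x0 := ptTup _)); first by rewrite size_map size_inp.
move=> t; rewrite size_map size_inp => ht.
rewrite (nth_map (ptTup _)) ?size_inp //.
apply: tup_ext => w.
rewrite nth_inp // castp_id.
done.
Qed.

Section Comp.
Variables (I : finType) (Y : I -> box) (Z : box) (psi : WD Y Z).
Variables (m : I -> finType) (X : forall i, m i -> box).
Variable phi : forall i : I, WD (X i) (Y i).
Variable f : forall p : {i : I & m i}, prop (X (projT1 p) (projT2 p)).
Hypothesis hf : forall p, hist1 (f p).

Local Notation fi i := (fun j => f (existT m i j)).
Local Notation G := (fun i => Palg (phi i) (fi i)).
Local Notation om := (wd_comp psi phi).

Lemma hfi i : forall j, hist1 (fi i j).
Proof. by move=> j; apply: hf. Qed.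

Lemma hG : forall i, hist1 (G i).
Proof. by move=> i; apply: hist1_Palg; apply: hfi. Qed.

Local Notation trP := (tr I Y Z psi G).
Local Notation trI i := (tr (m i) (X i) (Y i) (phi i) (fi i)).
Local Notation trO := (tr _ (Xc m X) Z om f).

Definition ai (i : I) (l : seq (Tup (@vin Z))) : seq (Tup (@vin (Y i))) :=
  map (fun t (w : bin (Y i)) => t (existT _ i w)) (inp I Y Z psi G l).

Lemma size_ai i l : size (ai i l) = size l.
Proof. by rewrite /ai size_map size_inp. Qed.

Definition V (l : seq (Tup (@vin Z))) (k : nat)
  : Tup (vsum (@voutF _ (Xc m X)) (wd_vdel om)) :=
  fun x => match x as x0 return pcar (vsum (@voutF _ (Xc m X)) (wd_vdel om) x0) with
  | inl x' => nth (ptTup _) (trI (projT1 (projT1 x')) (ai (projT1 (projT1 x')) l)) k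
                 (inl (existT (fun j => bout (X (projT1 (projT1 x')) j)) (projT2 (projT1 x')) (projT2 x')))
  | inr (inl p) => nth (ptTup _) (trI (projT1 p) (ai (projT1 p) l)) k (inr (projT2 p))
  | inr (inr d) => nth (ptTup _) (trP l) k (inr d)
  end.

Lemma V_dphi l k i d : V l k (inr (inl (existT (fun i0 : I => wd_Del (phi i0)) i d))) = nth (ptTup _) (trI i (ai i l)) k (inr d).
Proof. by []. Qed.

Lemma V_dpsi l k d : V l k (inr (inr d)) = nth (ptTup _) (trP l) k (inr d).
Proof. by []. Qed.

Lemma E1 l t i x :
  castp (embO_v I Y Z psi m X phi i x) (V l t (embO I Y Z psi m X phi i x))
  = nth (ptTup _) (trI i (ai i l)) t x.
Proof. by case: x => [[j o]|d]; rewrite castp_id. Qed.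

Lemma O1 l t b : t <= size l ->
  castp (fO_v I Y Z psi m X phi b) (V l t (fO I Y Z psi m X phi b))
  = nth (ptTup _) (trP l) t b.
Proof.
move=> ht; case: b => [[i o]|d]; last by rewrite castp_id.
rewrite (tr_out _ _ _ psi G hG l t (existT _ i o) ht) /=.
rewrite -/(ai i l).
rewrite nth_Spp; last by rewrite size_tr size_ai ltnS.
rewrite -(E1 l t i).
rewrite castp_tr.
exact: castp_pi.
Qed.
Lemma S1 l t b : t <= size l ->
  castp (fS_v I Y Z psi m X phi b) (tjoin (nth (ptTup _) l t) (V l t) (fS I Y Z psi m X phi b))
  = tjoin (nth (ptTup _) l t) (nth (ptTup _) (trP l) t) b.
Proof.
move=> ht; case: b => [z|b]; first by rewrite castp_id.
apply: etrans _ (O1 l t b ht); exact: castp_pi.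
Qed.

Lemma H1 l t i a : t < size l ->
  castp (hS_v I Y Z psi m X phi i a) (tjoin (nth (ptTup _) l t) (V l t) (hS I Y Z psi m X phi i a))
  = tjoin (nth (ptTup _) (ai i l) t) (nth (ptTup _) (trI i (ai i l)) t) a.
Proof.
move=> ht; case: a => [y|x]; last by apply: etrans _ (E1 l t i x); exact: castp_pi.
rewrite /tjoin /ai (nth_map (ptTup _)) ?size_inp //.
rewrite nth_inp //.
rewrite -(S1 l t) ?(ltnW ht) // castp_tr.
exact: castp_pi.
Qed.
Lemma step l : (forall t, t < size l -> nth (ptTup _) (trO l) t = V l t) ->
  forall k, k <= size l -> nth (ptTup _) (trO l) k = V l k.
Proof.
move=> H k hk; apply: tup_ext => -[[[i j] o]|[[i d]|d]].
- rewrite (tr_out _ _ _ om f hf l k _ hk).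
  apply: etrans _ (esym (tr_out _ _ _ (phi i) (fi i) (hfi i) (ai i l) k (existT _ j o) _)); last by rewrite size_ai.
  apply: (f_equal (fun L => nth (ptTup _) (f (existT m i j) L) k o)).
  apply: (eq_from_nth (x0 := ptTup _)); first by rewrite !size_map !size_zip !size_tr size_ai.
  move=> t; rewrite size_map size_inp => ht.
  rewrite [LHS](nth_map (ptTup _)) ?size_inp // [RHS](nth_map (ptTup _)) ?size_inp ?size_ai //.
  apply: tup_ext => w.
  rewrite nth_inp // nth_inp ?size_ai // H //.
  rewrite -(H1 l t i) // castp_tr; exact: castp_pi.
- case: k hk => [|k] hk.
    by rewrite (tr_del0 _ _ _ om f hf) /V; cbn [projT1 projT2]; rewrite (tr_del0 _ _ _ (phi i) (fi i) (hfi i) (ai i l) d).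
  rewrite (tr_delS _ _ _ om f hf l k _ hk) H //.
  rewrite /V; cbn [projT1 projT2]; rewrite (tr_delS _ _ _ (phi i) (fi i) (hfi i)) ?size_ai //.
  rewrite -(H1 l k i) // castp_tr; exact: castp_pi.
- case: k hk => [|k] hk.
    by rewrite (tr_del0 _ _ _ om f hf) /V; cbn [projT1 projT2]; rewrite (tr_del0 _ _ _ psi G hG l d).
  rewrite (tr_delS _ _ _ om f hf l k _ hk) H //.
  rewrite /V; cbn [projT1 projT2]; rewrite (tr_delS _ _ _ psi G hG) //.
  rewrite -(S1 l k) ?(ltnW hk) // castp_tr; exact: castp_pi.
Qed.
Lemma ai_dropl i l : 0 < size l -> ai i (dropl l) = dropl (ai i l).
Proof. by move=> hl; rewrite /ai (inp_dropl _ _ _ psi G hG) // map_dropl. Qed.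

Lemma V_causal l t : 0 < size l -> t < size l -> V (dropl l) t = V l t.
Proof.
move=> hl ht; apply: tup_ext => -[[[i j] o]|[[i d]|d]]; rewrite /V; cbn [projT1 projT2].
- by rewrite (ai_dropl i l hl) (nth_tr_dropl _ _ _ (phi i) (fi i) (hfi i)) ?size_ai.
- by rewrite (ai_dropl i l hl) (nth_tr_dropl _ _ _ (phi i) (fi i) (hfi i)) ?size_ai.
- by rewrite (nth_tr_dropl _ _ _ psi G hG).
Qed.

Lemma mainV n l : size l = n -> forall k, k <= n -> nth (ptTup _) (trO l) k = V l k.
Proof.
elim: n l => [|n IH] l hl k hk.
  by apply: step; rewrite hl.
apply: step; last by rewrite hl.
move=> t ht.
rewrite -(nth_dropl (ptTup _) (l := trO l) (k := t)); last by rewrite size_tr.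
rewrite (tr_causal _ _ _ om f hf) ?hl //.
rewrite IH ?size_dropl ?hl //; last by rewrite -ltnS -hl.
by rewrite V_causal ?hl // -hl.
Qed.

Lemma comp_law l : Palg om f l = Palg psi G l.
Proof.
apply: (eq_from_nth (x0 := ptTup _)).
  by rewrite (proj1 (hist1_Palg _ _ _ om f hf)) (proj1 (hist1_Palg _ _ _ psi G hG)).
move=> k; rewrite (proj1 (hist1_Palg _ _ _ om f hf)) => hk.
have -> : Palg om f l = Spp _ _ _ om (trO l) by [].
have -> : Palg psi G l = Spp _ _ _ psi (trP l) by [].
rewrite !nth_Spp ?size_tr //.
apply: tup_ext => o.
rewrite (mainV (size l) l erefl k) //.
rewrite -(O1 l k (wd_sO psi o)) // castp_tr; exact: castp_pi.
Qed.
End Comp.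

Theorem theorem3p14 :
  (* (1) identity law *)
  (forall (Z : box) (f : prop Z), hist1 f ->
     forall l, Palg (wd_id Z) (fun _ => f) l = f l)
  /\
  (* (2) composition law *)
  (forall (I : finType) (Y : I -> box) (Z : box) (psi : WD Y Z)
          (m : I -> finType) (X : forall i, m i -> box)
          (phi : forall i : I, WD (X i) (Y i))
          (f : forall p : {i : I & m i}, prop (X (projT1 p) (projT2 p))),
     (forall p, hist1 (f p)) ->
     forall l,
       Palg (wd_comp psi phi) f l
       = Palg psi (fun i => Palg (phi i) (fun j => f (existT m i j))) l).
Proof.
split; first exact: id_law.
move=> I Y Z psi m X phi f hf l; exact: comp_law.
Qed.
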